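(* Let $X$ be an object of a double complex in a well-powered abelian category. (a) If any one of the $L$-homologies ${}^{h}X_\wedge,\ {}^{h}X_d,\ {}^{\vee}X_d,\ {}^{\vee}X_h,\ {}^{d}X_h,\ {}^{d}X_\wedge,\ X_d$ is trivial, then $X_h$ is trivial. (b) If any one of the $L$-homologies ${}^{v}X_\wedge,\ {}^{v}X_d,\ {}^{\vee}X_d,\ {}^{\vee}X_v,\ {}^{d}X_v,\ {}^{d}X_\wedge,\ X_d$ is trivial, then $X_v$ is trivial. (c) If $X_d$ is trivial, then every $L$-homology of $X$ is trivial.
   Context: A double complex in a well-powered abelian category consists of objects $X_{i,j}$ ($i,j\in\mathbb Z$), horizontal morphisms $X_{i,j}\to X_{i+1,j}$ and vertical morphisms $X_{i,j}\to X_{i,j+1}$ such that consecutive horizontal morphisms compose to $0$, consecutive vertical morphisms compose to $0$, and every square commutes. For $X=X_{i,j}$ write $h^{\rm in}_X, h^{\rm out}_X$ for the horizontal morphisms into and out of $X$, $v^{\rm in}_X,v^{\rm out}_X$ for the vertical ones, and $\delta^{\rm in}_X\colon X_{i-1,j-1}\to X$, $\delta^{\rm out}_X\colon X\to X_{i+1,j+1}$ for the diagonal composites. Set $\mathsf K^h=\operatorname{Ker}h^{\rm out}_X$, $\mathsf K^v=\operatorname{Ker}v^{\rm out}_X$, $\mathsf K^d=\operatorname{Ker}\delta^{\rm out}_X$, $\mathsf I^h=\operatorname{Im}h^{\rm in}_X$, $\mathsf I^v=\operatorname{Im}v^{\rm in}_X$, $\mathsf I^d=\operatorname{Im}\delta^{\rm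 in}_X$. An $L$-homology of $X$ is a pair $(U,V)$ with $U$ in the sublattice generated by $\mathsf K^h,\mathsf K^v,\mathsf K^d$, $V$ in the sublattice generated by $\mathsf I^h,\mathsf I^v,\mathsf I^d$, and $V\le U$; it is written $U/V$ and called trivial if the quotient $U/V$ is a zero object (i.e. $U=V$). Named $L$-homologies: $X_h=\mathsf K^h/\mathsf I^h$, $X_v=\mathsf K^v/\mathsf I^v$, $X_d=\mathsf K^d/\mathsf I^d$, ${}^{\vee}X_h=(\mathsf K^h\vee\mathsf K^v)/\mathsf I^h$, ${}^{d}X_h=\mathsf K^d/\mathsf I^h$, ${}^{\vee}X_v=(\mathsf K^h\vee\mathsf K^v)/\mathsf I^v$, ${}^{d}X_v=\mathsf K^d/\mathsf I^v$, ${}^{h}X_d=\mathsf K^h/\mathsf I^d$, ${}^{v}X_d=\mathsf K^v/\mathsf I^d$, ${}^{\vee}X_d=(\mathsf K^h\vee\mathsf K^v)/\mathsf I^d$, ${}^{h}X_\wedge=\mathsf K^h/(\mathsf I^h\wedge\mathsf I^v)$, ${}^{v}X_\wedge=\mathsf K^v/(\mathsf I^h\wedge\mathsf I^v)$, ${}^{d}X_\wedge=\mathsf K^d/(\mathsf I^h\wedge\mathsf I^v)$. *)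

(* Defs.v *)
From Stdlib Require Import ZArith.
Open Scope Z_scope.

Record ZCat := {
  Obj : Type;
  Hom : Obj -> Obj -> Type;
  comp : forall {A B C : Obj}, Hom B C -> Hom A B -> Hom A C;
  idm : forall A : Obj, Hom A A;
  comp_assoc : forall (A B C D : Obj) (f : Hom C D) (g : Hom B C) (h : Hom A B),
      comp f (comp g h) = comp (comp f g) h;
  comp_id_l : forall (A B : Obj) (f : Hom A B), comp (idm B) f = f;
  comp_id_r : forall (A B : Obj) (f : Hom A B), comp f (idm A) = f;
  zobj : Obj;
  to_z : forall A : Obj, Hom A zobj;
  to_z_uniq : forall (A : Obj) (f : Hom A zobj), f = to_z A;
  from_z : forall A : Obj, Hom zobj A;
  from_z_uniq : forall (A : Obj) (f : Hom zobj A), f = from_z A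
}.

Arguments comp {_ _ _ _} _ _.
Arguments idm {_} _.

Section Basics.
Variable C : ZCat.

Definition zero (A B : Obj C) : Hom C A B := comp (from_z C B) (to_z C A).

Definition mono {A B : Obj C} (m : Hom C A B) : Prop :=
  forall (W : Obj C) (g h : Hom C W A), comp m g = comp m h -> g = h.

Definition epi {A B : Obj C} (e : Hom C A B) : Prop :=
  forall (W : Obj C) (g h : Hom C B W), comp g e = comp h e -> g = h.

Definition is_kernel {A B K : Obj C} (f : Hom C A B) (k : Hom C K A) : Prop :=
  comp f k = zero K B /\
  forall (W : Obj C) (g : Hom C W A), comp f g = zero W B ->
    exists u : Hom C W K, comp k u = g /\
      forall u' : Hom C W K, comp k u' = g -> u' = u.

Definition is_cokernel {A B Q : Obj C} (f : Hom C A B) (c : Hom C B Q) : Prop :=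
  comp c f = zero A Q /\
  forall (W : Obj C) (g : Hom C B W), comp g f = zero A W ->
    exists u : Hom C Q W, comp u c = g /\
      forall u' : Hom C Q W, comp u' c = g -> u' = u.

Definition is_product {A B P : Obj C} (p1 : Hom C P A) (p2 : Hom C P B) : Prop :=
  forall (W : Obj C) (q1 : Hom C W A) (q2 : Hom C W B),
    exists u : Hom C W P, (comp p1 u = q1 /\ comp p2 u = q2) /\
      forall u' : Hom C W P, comp p1 u' = q1 -> comp p2 u' = q2 -> u' = u.

Definition is_coproduct {A B S : Obj C} (i1 : Hom C A S) (i2 : Hom C B S) : Prop :=
  forall (W : Obj C) (q1 : Hom C A W) (q2 : Hom C B W),
    exists u : Hom C S W, (comp u i1 = q1 /\ comp u i2 = q2) /\
      forall u' : Hom C S W, comp u' i1 = q1 -> comp u' i2 = q2 -> u' = u.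

Definition abelian : Prop :=
  (forall (A B : Obj C) (f : Hom C A B),
      exists (K : Obj C) (k : Hom C K A), is_kernel f k) /\
  (forall (A B : Obj C) (f : Hom C A B),
      exists (Q : Obj C) (c : Hom C B Q), is_cokernel f c) /\
  (forall A B : Obj C, exists (P : Obj C) (p1 : Hom C P A) (p2 : Hom C P B),
      is_product p1 p2) /\
  (forall A B : Obj C, exists (S : Obj C) (i1 : Hom C A S) (i2 : Hom C B S),
      is_coproduct i1 i2) /\
  (forall (A B : Obj C) (m : Hom C A B), mono m ->
      exists (D : Obj C) (f : Hom C B D), is_kernel f m) /\
  (forall (A B : Obj C) (e : Hom C A B), epi e ->
      exists (D : Obj C) (f : Hom C D A), is_cokernel f e).

(** Subobjects of X (represented by monomorphisms into X). *)
Record sub (X : Obj C) := {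
  sobj : Obj C;
  sarr : Hom C sobj X;
  smono : mono sarr
}.
Arguments sobj {X} _.
Arguments sarr {X} _.

Definition sub_le {X : Obj C} (U V : sub X) : Prop :=
  exists f : Hom C (sobj U) (sobj V), comp (sarr V) f = sarr U.

Definition sub_eq {X : Obj C} (U V : sub X) : Prop := sub_le U V /\ sub_le V U.

Definition is_meet {X : Obj C} (U V M : sub X) : Prop :=
  sub_le M U /\ sub_le M V /\
  forall W : sub X, sub_le W U -> sub_le W V -> sub_le W M.

Definition is_join {X : Obj C} (U V J : sub X) : Prop :=
  sub_le U J /\ sub_le V J /\
  forall W : sub X, sub_le U W -> sub_le V W -> sub_le J W.

Definition is_ker_sub {X B : Obj C} (f : Hom C X B) (U : sub X) : Prop :=
  is_kernel f (sarr U).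

Definition factors_through {A X : Obj C} (f : Hom C A X) (U : sub X) : Prop :=
  exists g : Hom C A (sobj U), comp (sarr U) g = f.

Definition is_im_sub {A X : Obj C} (f : Hom C A X) (U : sub X) : Prop :=
  factors_through f U /\ forall W : sub X, factors_through f W -> sub_le U W.

Inductive in_gen {X : Obj C} (G : sub X -> Prop) : sub X -> Prop :=
  | gen_base : forall U V, G V -> sub_eq U V -> in_gen G U
  | gen_meet : forall U V M, in_gen G U -> in_gen G V -> is_meet U V M -> in_gen G M
  | gen_join : forall U V J, in_gen G U -> in_gen G V -> is_join U V J -> in_gen G J.

Definition gen3 {X : Obj C} (A1 A2 A3 : sub X) : sub X -> Prop :=
  fun U => U = A1 \/ U = A2 \/ U = A3.

(** An L-homology U/V is trivial iff U = V as subobjects. *)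
Definition trivial_hom {X : Obj C} (U V : sub X) : Prop := sub_eq U V.

Record dcomplex := {
  dX : Z -> Z -> Obj C;
  dh : forall i j : Z, Hom C (dX i j) (dX (i + 1) j);
  dv : forall i j : Z, Hom C (dX i j) (dX i (j + 1));
  dh_dh : forall i j : Z, comp (dh (i + 1) j) (dh i j) = zero _ _;
  dv_dv : forall i j : Z, comp (dv i (j + 1)) (dv i j) = zero _ _;
  d_sq : forall i j : Z, comp (dv (i + 1) j) (dh i j) = comp (dh i (j + 1)) (dv i j)
}.

(** Local data at the object X = X_{i+1, j+1} (every position of Z x Z is of
    this form); this indexing avoids the non-convertibility of (i-1)+1 and i. *)
Definition obj_at (D : dcomplex) (i j : Z) : Obj C := dX D (i + 1) (j + 1).

Definition h_in (D : dcomplex) (i j : Z) : Hom C (dX D i (j + 1)) (obj_at D i j) :=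
  dh D i (j + 1).
Definition v_in (D : dcomplex) (i j : Z) : Hom C (dX D (i + 1) j) (obj_at D i j) :=
  dv D (i + 1) j.
Definition d_in (D : dcomplex) (i j : Z) : Hom C (dX D i j) (obj_at D i j) :=
  comp (dv D (i + 1) j) (dh D i j).
Definition h_out (D : dcomplex) (i j : Z) :
  Hom C (obj_at D i j) (dX D (i + 1 + 1) (j + 1)) := dh D (i + 1) (j + 1).
Definition v_out (D : dcomplex) (i j : Z) :
  Hom C (obj_at D i j) (dX D (i + 1) (j + 1 + 1)) := dv D (i + 1) (j + 1).
Definition d_out (D : dcomplex) (i j : Z) :
  Hom C (obj_at D i j) (dX D (i + 1 + 1) (j + 1 + 1)) :=
  comp (dv D (i + 1 + 1) (j + 1)) (dh D (i + 1) (j + 1)).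

End Basics.

Arguments sobj {C X} _.
Arguments sarr {C X} _.
Arguments sub_le {C X} _ _.
Arguments sub_eq {C X} _ _.
Arguments is_meet {C X} _ _ _.
Arguments is_join {C X} _ _ _.
Arguments is_ker_sub {C X B} _ _.
Arguments is_im_sub {C A X} _ _.
Arguments in_gen {C X} _ _.
Arguments gen3 {C X} _ _ _ _.
Arguments trivial_hom {C X} _ _.
Arguments dX {C} _ _ _.
Arguments dh {C} _ _ _.
Arguments dv {C} _ _ _.
Arguments obj_at {C} _ _ _.
Arguments h_in {C} _ _ _.
Arguments v_in {C} _ _ _.
Arguments d_in {C} _ _ _.
Arguments h_out {C} _ _ _.
Arguments v_out {C} _ _ _.
Arguments d_out {C} _ _ _.

(* Main.v *)
Require Import Defs.
From Stdlib Require Import ZArith.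
Open Scope Z_scope.

Section Aux.
Variable C : ZCat.

Lemma comp_zero_r (A B B' : Obj C) (f : Hom C B B') :
  comp f (zero C A B) = zero C A B'.
Proof.
  unfold zero. rewrite comp_assoc.
  rewrite (from_z_uniq C _ (comp f (from_z C B))). reflexivity.
Qed.

Lemma sle_refl {X : Obj C} (U : sub C X) : sub_le U U.
Proof. exists (idm (sobj U)). apply comp_id_r. Qed.

Lemma sle_trans {X : Obj C} (U V W : sub C X) :
  sub_le U V -> sub_le V W -> sub_le U W.
Proof.
  intros [f Hf] [g Hg]. exists (comp g f).
  rewrite comp_assoc, Hg. exact Hf.
Qed.

Lemma ker_ge {X B : Obj C} (f : Hom C X B) (K U : sub C X) :
  is_ker_sub f K -> comp f (sarr U) = zero C _ _ -> sub_le U K.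
Proof.
  intros [_ HK] H. destruct (HK _ _ H) as [u [Hu _]]. exists u. exact Hu.
Qed.

Lemma im_le {A X : Obj C} (f : Hom C A X) (I U : sub C X) :
  is_im_sub f I -> factors_through C f U -> sub_le I U.
Proof. intros [_ H] HU. apply H. exact HU. Qed.

Lemma gen_interval {X : Obj C} (G : sub C X -> Prop) (L T : sub C X) :
  (forall V, G V -> sub_le L V /\ sub_le V T) ->
  forall U, in_gen G U -> sub_le L U /\ sub_le U T.
Proof.
  intros HG U HU. induction HU as [U V HV [H1 H2] | U V M _ [IU1 IU2] _ [IV1 IV2] [M1 [M2 M3]]
    | U V J _ [IU1 IU2] _ [IV1 IV2] [J1 [J2 J3]]].
  - destruct (HG V HV) as [A B]. split.
    + eapply sle_trans; eauto.
    + eapply sle_trans; eauto.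
  - split.
    + apply M3; assumption.
    + eapply sle_trans; eauto.
  - split.
    + eapply sle_trans; eauto.
    + apply J3; assumption.
Qed.
End Aux.

Theorem corollary4p3 (C : ZCat) (HC : abelian C) (D : dcomplex C) (i j : Z)
  (Kh Kv Kd Ih Iv Id KhvJ IhvM : sub C (obj_at D i j)) :
  is_ker_sub (h_out D i j) Kh ->
  is_ker_sub (v_out D i j) Kv ->
  is_ker_sub (d_out D i j) Kd ->
  is_im_sub (h_in D i j) Ih ->
  is_im_sub (v_in D i j) Iv ->
  is_im_sub (d_in D i j) Id ->
  is_join Kh Kv KhvJ ->
  is_meet Ih Iv IhvM ->
  (* (a) *)
  ((trivial_hom Kh IhvM \/ trivial_hom Kh Id \/ trivial_hom KhvJ Id \/
    trivial_hom KhvJ Ih \/ trivial_hom Kd Ih \/ trivial_hom Kd IhvM \/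
    trivial_hom Kd Id) -> trivial_hom Kh Ih) /\
  (* (b) *)
  ((trivial_hom Kv IhvM \/ trivial_hom Kv Id \/ trivial_hom KhvJ Id \/
    trivial_hom KhvJ Iv \/ trivial_hom Kd Iv \/ trivial_hom Kd IhvM \/
    trivial_hom Kd Id) -> trivial_hom Kv Iv) /\
  (* (c) *)
  (trivial_hom Kd Id ->
   forall U V : sub C (obj_at D i j),
     in_gen (gen3 Kh Kv Kd) U -> in_gen (gen3 Ih Iv Id) V -> sub_le V U ->
     trivial_hom U V).
Proof.
  intros HKh HKv HKd HIh HIv HId HJ HM.
  assert (IhKh : sub_le Ih Kh).
  { apply (im_le C (h_in D i j)); auto.
    destruct HKh as [_ HK].
    destruct (HK _ (h_in D i j) (dh_dh C D i (j+1))) as [u [Hu _]].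
    exists u; exact Hu. }
  assert (IvKv : sub_le Iv Kv).
  { apply (im_le C (v_in D i j)); auto.
    destruct HKv as [_ HK].
    destruct (HK _ (v_in D i j) (dv_dv C D (i+1) j)) as [u [Hu _]].
    exists u; exact Hu. }
  assert (IdIh : sub_le Id Ih).
  { apply (im_le C (d_in D i j)); auto.
    destruct HIh as [[g Hg] _].
    exists (comp g (dv D i j)). unfold d_in. rewrite d_sq, comp_assoc, Hg.
    reflexivity. }
  assert (IdIv : sub_le Id Iv).
  { apply (im_le C (d_in D i j)); auto.
    destruct HIv as [[g Hg] _].
    exists (comp g (dh D i j)). unfold d_in. rewrite comp_assoc, Hg.
    reflexivity. }
  assert (KhKd : sub_le Kh Kd).
  { apply (ker_ge C (d_out D i j)); auto. unfold d_out.
    rewrite <- comp_assoc. destruct HKh as [H0 _].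
    unfold h_out in H0. unfold obj_at in H0 |- *. rewrite H0. apply comp_zero_r. }
  assert (KvKd : sub_le Kv Kd).
  { apply (ker_ge C (d_out D i j)); auto. unfold d_out.
    rewrite d_sq. rewrite <- comp_assoc. destruct HKv as [H0 _].
    unfold v_out in H0. unfold obj_at in H0 |- *. rewrite H0. apply comp_zero_r. }
  destruct HJ as [J1 [J2 J3]]. destruct HM as [M1 [M2 M3]].
  assert (IdM : sub_le Id IhvM) by (apply M3; auto).
  assert (JKd : sub_le KhvJ Kd) by (apply J3; auto).
  assert (MIh := M1). assert (MIv := M2).
  assert (T3 : forall A B E F : sub C (obj_at D i j), sub_le A B -> sub_le B E -> sub_le E F -> sub_le A F).
  { intros A B E F h1 h2 h3. eapply sle_trans; [exact h1|]. eapply sle_trans; [exact h2|exact h3]. }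
  assert (KhJ := J1). assert (KvJ := J2).
  assert (KhId : sub_le Kh Kh) by apply sle_refl.
  assert (KvId : sub_le Kv Kv) by apply sle_refl.
  assert (IhId : sub_le Ih Ih) by apply sle_refl.
  assert (IvId : sub_le Iv Iv) by apply sle_refl.
  assert (IdIh' : sub_le IhvM Ih) by exact M1.
  split; [|split].
  - intros H. split; [|exact IhKh].
    destruct H as [[H _]|[[H _]|[[H _]|[[H _]|[[H _]|[[H _]|[H _]]]]]]].
    + exact (T3 _ _ _ _ KhId H M1).
    + exact (T3 _ _ _ _ KhId H IdIh).
    + exact (T3 _ _ _ _ KhJ H IdIh).
    + exact (T3 _ _ _ _ KhJ H IhId).
    + exact (T3 _ _ _ _ KhKd H IhId).
    + exact (T3 _ _ _ _ KhKd H M1).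
    + exact (T3 _ _ _ _ KhKd H IdIh).
  - intros H. split; [|exact IvKv].
    destruct H as [[H _]|[[H _]|[[H _]|[[H _]|[[H _]|[[H _]|[H _]]]]]]].
    + exact (T3 _ _ _ _ KvId H M2).
    + exact (T3 _ _ _ _ KvId H IdIv).
    + exact (T3 _ _ _ _ KvJ H IdIv).
    + exact (T3 _ _ _ _ KvJ H IvId).
    + exact (T3 _ _ _ _ KvKd H IvId).
    + exact (T3 _ _ _ _ KvKd H M2).
    + exact (T3 _ _ _ _ KvKd H IdIv).
  - intros [H1 H2] U V HU HV HVU.
    assert (KdId : sub_le Kd Id) by exact H1.
    destruct (gen_interval C (gen3 Kh Kv Kd) Id Kd) with (U := U) as [_ UKd]; auto.
    { intros W [ -> | [ -> | -> ] ]; split.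
      - eapply sle_trans; [exact IdIh| exact IhKh].
      - exact KhKd.
      - eapply sle_trans; [exact IdIv| exact IvKv].
      - exact KvKd.
      - exact H2.
      - apply sle_refl. }
    destruct (gen_interval C (gen3 Ih Iv Id) Id Kd) with (U := V) as [IdV _]; auto.
    { intros W [ -> | [ -> | -> ] ]; split.
      - exact IdIh.
      - eapply sle_trans; [exact IhKh| exact KhKd].
      - exact IdIv.
      - eapply sle_trans; [exact IvKv| exact KvKd].
      - apply sle_refl.
      - exact H2. }
    split; [|exact HVU].
    eapply sle_trans; [exact UKd|]. eapply sle_trans; [exact KdId|exact IdV].
Qed.
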